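(* Let $n \ge m \ge 2$ and let $K_{n,m}$ be the complete bipartite graph with bipartition $(X,Y)$, $|X|=n$, $|Y|=m$. If $U$ is a strong edge geodetic set of $K_{n,m}$, then $X \subseteq U$ or $Y \subseteq U$.
   Context: All graphs are finite, simple and connected. A set $S \subseteq V(G)$ is a strong edge geodetic set of $G$ if one can assign to every unordered pair $\{u,v\}$ of distinct vertices of $S$ either one shortest $u,v$-path $P_{uv}$ in $G$ or no path, in such a way that every edge of $G$ lies on at least one of the assigned paths. *)

(* Defs.v *)
From mathcomp Require Import all_boot.
Set Implicit Arguments. Unset Strict Implicit. Unset Printing Implicit Defensive.

(* Simple graph given by an (assumed symmetric, irreflexive) relation e on a finType T.
   A walk from u is a sequence p with path e u p; it ends at last u p and has length size p. *)

Definition shortest_path (T : finType) (e : rel T) (u v : T) (p : seq T) : Prop :=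
  [/\ path e u p, last u p = v &
      forall q : seq T, path e u q -> last u q = v -> size p <= size q].

Definition edge_on (T : finType) (u : T) (p : seq T) (a b : T) : bool :=
  ((a, b) \in zip (u :: p) p) || ((b, a) \in zip (u :: p) p).

(* Strong edge geodetic set: to each unordered pair {u,v} of distinct vertices of S
   (represented by the ordered pair with enum_rank u < enum_rank v) we assign
   either one shortest u,v-path or none, such that every edge lies on some assigned path. *)
Definition strong_edge_geodetic (T : finType) (e : rel T) (S : {set T}) : Prop :=
  exists f : T -> T -> option (seq T),
    (forall u v p, u \in S -> v \in S -> (enum_rank u < enum_rank v)%N ->
        f u v = Some p -> shortest_path e u v p) /\
    (forall a b, e a b -> exists u v p,
        [/\ u \in S, v \in S, (enum_rank u < enum_rank v)%N,
            f u v = Some p & edge_on u p a b]).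

Definition Kbip_rel (n m : nat) : rel ('I_n + 'I_m) :=
  fun x y => is_inl x != is_inl y.
Definition Kbip_X (n m : nat) : {set 'I_n + 'I_m} := [set x | is_inl x].
Definition Kbip_Y (n m : nat) : {set 'I_n + 'I_m} := [set x | ~~ is_inl x].

(* Main.v *)
Require Import Defs.
From mathcomp Require Import all_boot.

Theorem mainTheorem2 (n m : nat) (U : {set 'I_n + 'I_m}) :
  (2 <= m)%N -> (m <= n)%N ->
  strong_edge_geodetic (@Kbip_rel n m) U ->
  (Kbip_X n m \subset U) \/ (Kbip_Y n m \subset U).
Proof.
move=> _ _ [f [Hf Hcov]].
case: (boolP (Kbip_X n m \subset U)) => [HX|/subsetPn [x]]; first by left.
rewrite inE => Hx xU.
case: (boolP (Kbip_Y n m \subset U)) => [HY|/subsetPn [y]]; first by right.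
rewrite inE => Hy yU.
exfalso.
have Exy : Kbip_rel x y by rewrite /Kbip_rel Hx (negbTE Hy).
have [u [v [p [uU vU Huv fp Hon]]]] := Hcov x y Exy.
have [Hp Hl Hmin] := Hf u v p uU vU Huv fp.
have Hsz : (size p <= 2)%N.
  case: (boolP (is_inl u == is_inl v)) => Huv'.
  - pose w := if is_inl u then y else x.
    apply: (Hmin [:: w; v]) => //=.
    rewrite /Kbip_rel /w; move/eqP: Huv' => <-.
    by case: (is_inl u); rewrite ?Hx ?(negbTE Hy).
  - apply: (leq_trans (Hmin [:: v] _ _)) => //=; by rewrite /Kbip_rel Huv'.
have Hne : forall z, z \in U -> z <> x /\ z <> y.
  by move=> z zU; split=> Ez; subst z; [rewrite zU in xU | rewrite zU in yU].
have [ux uy] := Hne u uU.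
have [vx vy] := Hne v vU.
clear fp Hmin; move: Hon Hl Hsz; rewrite /edge_on.
case: p Hp => [|a [|b [|c p]]] //= _.
- by rewrite !inE !xpair_eqE => /orP [] /andP [/eqP ? /eqP ?] ?; subst.
- rewrite !inE !xpair_eqE => + Hb.
  subst b.
  by move=> /orP [] /orP [] /andP [/eqP ? /eqP ?]; subst.
Qed.
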